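(* For every positive integer $n$, the class $\mathcal K_n^*$ has the expansion property relative to the class $\mathcal K_n$.
   Context: Expansion property: let $L\subseteq L^*$ be relational languages, $\mathcal K$ a class of finite $L$-structures and $\mathcal K^*$ a class of finite $L^*$-structures whose $L$-reducts lie in $\mathcal K$. $\mathcal K^*$ has the expansion property relative to $\mathcal K$ if for every $\mathbf A\in\mathcal K$ there is $\mathbf B\in\mathcal K$ such that for all $\mathbf A^*,\mathbf B^*\in\mathcal K^*$ whose $L$-reducts are $\mathbf A$ and $\mathbf B$ respectively, $\mathbf A^*$ embeds into $\mathbf B^*$. A directed graph $(A,E)$ ($E$ irreflexive and asymmetric) is complete multipartite if the relation ''$u=v$, or neither $E(u,v)$ nor $E(v,u)$'' is an equivalence relation on $A$; its classes are called the parts. $\mathcal K_n$ is the class of finite complete multipartite directed graphs with at most $n$ parts (the age of the generic complete $n$-partite directed graph $n*I_\omega$). $\mathcal K_n^*$ is the class of finite structures $(A,E,P_0,\dots,P_{n-1},<)$ such that $(A,E)\in\mathcal K_n$, $P_0,\dots,P_{n-1}$ are pairwise disjoint subsets of $A$ each of which is either empty or a part, every part equals some $P_i$, and $<$ is a linear order on $A$ such that every element of $P_i$ is below every element of $P_j$ whenever $i<j$. *)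

(* Defs.v *)
From mathcomp Require Import all_boot.
Set Implicit Arguments. Unset Strict Implicit. Unset Printing Implicit Defensive.

Definition is_digraph (T : finType) (E : rel T) : Prop :=
  (forall x, ~~ E x x) /\ (forall x y, E x y -> ~~ E y x).

Definition nonadj (T : finType) (E : rel T) : rel T :=
  fun u v => (u == v) || (~~ E u v && ~~ E v u).

Definition complete_multipartite (T : finType) (E : rel T) : Prop :=
  is_digraph E /\ equivalence_rel (nonadj E).

Definition part_of (T : finType) (E : rel T) (x : T) : {set T} :=
  [set y | nonadj E x y].

Definition is_part (T : finType) (E : rel T) (X : {set T}) : Prop :=
  exists x, X = part_of E x.

Definition parts (T : finType) (E : rel T) : {set {set T}} :=
  [set part_of E x | x in T].

Definition in_Kn (n : nat) (T : finType) (E : rel T) : Prop :=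
  complete_multipartite E /\ #|parts E| <= n.

Definition in_Kn_star (n : nat) (T : finType) (E : rel T)
    (P : 'I_n -> {set T}) (lt : rel T) : Prop :=
  in_Kn n E /\
  [/\ (forall i j : 'I_n, i != j -> [disjoint P i & P j]),
      (forall i : 'I_n, P i = set0 \/ is_part E (P i)),
      (forall X, is_part E X -> exists i : 'I_n, X = P i),
      [/\ (forall x, ~~ lt x x),
          (forall x y z, lt x y -> lt y z -> lt x z) &
          (forall x y, x != y -> lt x y || lt y x)] &
      (forall (i j : 'I_n) x y, (i < j)%N -> x \in P i -> y \in P j -> lt x y)].

Definition star_embedding (n : nat) (TA TB : finType)
    (EA : rel TA) (PA : 'I_n -> {set TA}) (ltA : rel TA)
    (EB : rel TB) (PB : 'I_n -> {set TB}) (ltB : rel TB) (f : TA -> TB) : Prop :=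
  [/\ injective f,
      (forall x y, EB (f x) (f y) = EA x y),
      (forall (i : 'I_n) x, (f x \in PB i) = (x \in PA i)) &
      (forall x y, ltB (f x) (f y) = ltA x y)].

(* Main.v *)
Require Import Defs.
From mathcomp Require Import all_boot.
From Stdlib Require Import ClassicalEpsilon.
Set Implicit Arguments. Unset Strict Implicit. Unset Printing Implicit Defensive.

Definition rnk (X : finType) (P : pred X) (ltX : rel X) x := #|[set z | P z && ltX z x]|.

Lemma rnkE (X : finType) (P : pred X) (ltX : rel X) :
  (forall x, ltX x x = false) ->
  (forall x y z, P x -> P y -> P z -> ltX x y -> ltX y z -> ltX x z) ->
  (forall x y, P x -> P y -> x <> y -> ltX x y || ltX y x) ->
  forall x y, P x -> P y -> ltX x y = (rnk P ltX x < rnk P ltX y).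
Proof.
move=> irr tr tot.
have rnk_lt : forall x y, P x -> P y -> ltX x y -> rnk P ltX x < rnk P ltX y.
  move=> x y Px Py lxy; apply: proper_card; apply/properP; split.
    apply/subsetP=> z; rewrite !inE => /andP[Pz lzx]; rewrite Pz /=.
    exact: tr lzx lxy.
  by exists x; rewrite !inE ?Px ?lxy ?irr.
move=> x y Px Py; case lxy: (ltX x y); first by rewrite rnk_lt.
case: (eqVneq x y) => [->|nxy]; first by rewrite ltnn.
have := tot _ _ Px Py (elimN eqP nxy); rewrite lxy /= => lyx.
by apply/esym/negbTE; rewrite -leqNgt ltnW // rnk_lt.
Qed.

Lemma rnk_inj (X : finType) (P : pred X) (ltX : rel X) :
  (forall x, ltX x x = false) ->
  (forall x y z, P x -> P y -> P z -> ltX x y -> ltX y z -> ltX x z) ->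
  (forall x y, P x -> P y -> x <> y -> ltX x y || ltX y x) ->
  forall x y, P x -> P y -> rnk P ltX x = rnk P ltX y -> x = y.
Proof.
move=> irr tr tot x y Px Py e; apply/eqP; apply: contraT => nxy.
have := tot _ _ Px Py (elimN eqP nxy).
by rewrite !(rnkE irr tr tot) // e ltnn.
Qed.

Lemma ordemb (X Y : finType) (P : pred X) (ltX : rel X) (ltY : rel Y) :
  (forall x, ltX x x = false) ->
  (forall x y z, P x -> P y -> P z -> ltX x y -> ltX y z -> ltX x z) ->
  (forall x y, P x -> P y -> x <> y -> ltX x y || ltX y x) ->
  (forall x, ltY x x = false) ->
  (forall x y z, ltY x y -> ltY y z -> ltY x z) ->
  (forall x y, x <> y -> ltY x y || ltY y x) ->
  #|P| < #|Y| ->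
  exists h : X -> Y, forall x y, P x -> P y -> ltY (h x) (h y) = ltX x y.
Proof.
move=> irX trX toX irY trY toY cPY.
have trY' : forall x y z, predT x -> predT y -> predT z -> ltY x y -> ltY y z -> ltY x z.
  by move=> x y z _ _ _; apply: trY.
have toY' : forall x y, predT x -> predT y -> x <> y -> ltY x y || ltY y x.
  by move=> x y _ _; apply: toY.
have rYlt : forall y, rnk predT ltY y < #|Y|.
  move=> y; rewrite -cardsT; apply: proper_card; apply/properP; split.
    by apply/subsetP=> z; rewrite inE.
  by exists y; rewrite !inE ?irY.
pose rO (y : Y) : 'I_#|Y| := Ordinal (rYlt y).
have rOinj : injective rO.
  move=> a b /(congr1 val) /= e; exact: (rnk_inj irY trY' toY').
have [g _ rOg] := inj_card_bij rOinj (eq_leq (card_ord _)).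
have rPlt : forall x, P x -> rnk P ltX x < #|Y|.
  move=> x Px; apply: leq_trans (ltnW cPY); apply: (@leq_trans #|[set z | P z]|).
    apply: proper_card; apply/properP; split.
      by apply/subsetP=> z; rewrite !inE => /andP[].
    by exists x; rewrite !inE ?Px ?irX.
  by apply: subset_leq_card; apply/subsetP=> z; rewrite inE.
have Y0 : 0 < #|Y| by apply: leq_ltn_trans cPY.
exists (fun x => g (insubd (Ordinal Y0) (rnk P ltX x))).
move=> x y Px Py.
rewrite (rnkE irY trY' toY') // (rnkE irX trX toX) //.
have rr : forall z, P z -> rnk predT ltY (g (insubd (Ordinal Y0) (rnk P ltX z))) = rnk P ltX z.
  move=> z Pz; have := congr1 val (rOg (insubd (Ordinal Y0) (rnk P ltX z))).
  by rewrite /= val_insubd rPlt.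
by rewrite !rr.
Qed.

Definition validL n (T : finType) (c : T -> 'I_n) (E : rel T) : Prop :=
  (forall x y, c x = c y -> E x y = false) /\
  (forall x y, c x <> c y -> E y x = ~~ E x y).

Definition ord_ok n (T : finType) (c : T -> 'I_n) (lt : rel T) : Prop :=
  [/\ forall x, lt x x = false,
      forall x y z, c x = c y -> c y = c z -> lt x y -> lt y z -> lt x z &
      forall x y, c x = c y -> x <> y -> lt x y || lt y x].

Definition lemb n (TA TB : finType) (cA : TA -> 'I_n) (EA : rel TA) (ltA : rel TA)
  (cB : TB -> 'I_n) (EB : rel TB) (ltB : rel TB) (f : TA -> TB) : Prop :=
  [/\ forall x, cB (f x) = cA x,
      forall x y, EB (f x) (f y) = EA x y &
      forall x y, cA x = cA y -> ltB (f x) (f y) = ltA x y].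

Definition Phi n k : Prop :=
  forall (I TA : finType) (EA : rel TA) (cA : I -> TA -> 'I_n) (ltA : I -> rel TA),
  (forall i, validL (cA i) EA /\ ord_ok (cA i) (ltA i)) ->
  exists (TB : finType) (cB : TB -> 'I_n) (EB : rel TB) (ltB0 : rel TB),
  [/\ validL cB EB, ord_ok cB ltB0, (forall l, exists x, cB x = l) &
      forall lt, ord_ok cB lt ->
        (forall x y, cB x = cB y -> k <= cB x -> lt x y = ltB0 x y) ->
        forall i, exists f, lemb (cA i) EA (ltA i) cB EB lt f].

Lemma ltn_flip (a b : nat) : a <> b -> (b < a) = ~~ (a < b).
Proof. move=> nab; rewrite ltnNge leq_eqVlt; case: eqP => //. Qed.

Lemma ord_neq n (a b : 'I_n) : a <> b -> (a : nat) <> b.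
Proof. by move=> nab e; apply: nab; apply: val_inj. Qed.

Lemma phi0 n : Phi n 0.
Proof.
move=> I TA EA cA ltA hv.
pose TB := ((I * TA) + 'I_n)%type.
pose cU (u : TB) : 'I_n := match u with inl p => cA p.1 p.2 | inr l => l end.
pose EU (u v : TB) : bool := match u, v with
  | inl p, inl q => if p.1 == q.1 then EA p.2 q.2 else (cU u < cU v)
  | _, _ => cU u < cU v end.
pose ltU (u v : TB) : bool := match u, v with
  | inl p, inl q => if p.1 == q.1 then ltA p.1 p.2 q.2 else (enum_rank p.1 < enum_rank q.1)
  | inl _, inr _ => true
  | _, _ => false end.
exists TB, cU, EU, ltU; split.
- split.
  + move=> [[i x]|l] [[j y]|l'] //= e; try by rewrite e ltnn.
    case: eqP => [/= eij|]; last by rewrite e ltnn.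
    by subst j; apply: (proj1 (proj1 (hv i))).
  + move=> [[i x]|l] [[j y]|l'] //= e; try by rewrite ltn_flip //; apply: ord_neq.
    case: (eqVneq i j) => [eij|nij] /=.
      by subst j; apply: (proj2 (proj1 (hv i))).
    by rewrite ltn_flip //; apply: ord_neq.
- split.
  + move=> [[i x]|l] //=; rewrite ?eqxx; by case: (proj2 (hv i)).
  + move=> [[i x]|l] [[j y]|l'] [[k z]|l''] //= e1 e2.
    case: (eqVneq i j) => [eij|nij] /=; case: (eqVneq j k) => [ejk|njk] /=;
      subst; rewrite ?eqxx //=.
    * by case: (proj2 (hv k)) => _ tr _; apply: tr.
    * by move=> _; rewrite (negbTE njk).
    * by rewrite (negbTE nij).
    * case: (eqVneq i k) => [eik|nik]; last by apply: ltn_trans.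
      by subst; move=> a b; have := ltn_trans a b; rewrite ltnn.
  + move=> [[i x]|l] [[j y]|l'] //= e ne.
    * case: (eqVneq i j) => [eij|nij] /=.
        subst; rewrite ?eqxx; case: (proj2 (hv j)) => _ _ tot; apply: tot => //.
        by move=> exy; apply: ne; rewrite exy.
      rewrite -neq_ltn; apply/eqP => /val_inj /enum_rank_inj eij.
      by rewrite eij eqxx in nij.
    * by subst; case: ne.
- by move=> l; exists (inr l).
- move=> lt lok agree i; exists (fun x => inl (i, x)); split => //.
  + by move=> x y /=; rewrite eqxx.
  + by move=> x y e; rewrite agree //= eqxx.
Qed.
Lemma spl n (TB : finType) (cB : TB -> 'I_n) (EB ltB0 : rel TB) (k : 'I_n) :
  validL cB EB -> ord_ok cB ltB0 -> (forall l, exists x, cB x = l) ->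
  exists (T' : finType) (c' : T' -> 'I_n) (E' lt'0 : rel T'),
  [/\ validL c' E', ord_ok c' lt'0, (forall l, exists x, c' x = l) &
    forall lt', ord_ok c' lt' ->
      (forall x y, c' x = c' y -> k < c' x -> lt' x y = lt'0 x y) ->
      exists e : TB -> T', [/\ injective e, forall x, c' (e x) = cB x,
         forall x y, E' (e x) (e y) = EB x y &
         forall x y, cB x = cB y -> k <= cB x -> lt' (e x) (e y) = ltB0 x y]].
Proof.
move=> [vB1 vB2] [irB trB toB] inh.
pose W := 'I_(#|TB|.+1).
pose T' := (W + (TB * {ffun W -> bool}))%type.
pose c' (u : T') : 'I_n := match u with inl _ => k | inr p => cB p.1 end.
pose E' (u v : T') : bool := match u, v with
  | inl _, inl _ => false
  | inl w, inr p => if cB p.1 == k then false else ~~ p.2 w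
  | inr p, inl w => if cB p.1 == k then false else p.2 w
  | inr p, inr q => EB p.1 q.1 end.
pose lt0 (u v : T') : bool := match u, v with
  | inl w, inl w' => w < w'
  | inl _, inr _ => true
  | inr _, inl _ => false
  | inr p, inr q => ltB0 p.1 q.1 || ((p.1 == q.1) && (enum_rank p.2 < enum_rank q.2)) end.
exists T', c', E', lt0; split.
- split.
  + move=> [w|[b g]] [w'|[b' g']] //= e.
    * by rewrite -e eqxx.
    * by rewrite e eqxx.
    * by apply: vB1.
  + move=> [w|[b g]] [w'|[b' g']] //= e; try by case: e.
    * by case: eqP => [eb|]; [case: e|rewrite negbK].
    * by case: eqP => [eb|]; [case: e|].
    * by apply: vB2.
- split.
  + move=> [w|[b g]] /=; first by rewrite ltnn.
    by rewrite irB eqxx ltnn.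
  + move=> [w|[b1 g1]] [w'|[b2 g2]] [w''|[b3 g3]] //= e1 e2.
    * by apply: ltn_trans.
    * move=> /orP[l12|/andP[/eqP e12 r12]] /orP[l23|/andP[/eqP e23 r23]];
        apply/orP.
      - by left; apply: trB l23.
      - by left; rewrite -e23.
      - by left; rewrite e12.
      - by right; rewrite e12 e23 eqxx (ltn_trans r12 r23).
  + move=> [w|[b g]] [w'|[b' g']] //= e ne.
    * rewrite -neq_ltn; apply/eqP => /val_inj ew; by apply: ne; rewrite ew.
    * case: (eqVneq b b') => [ebb|nbb] /=.
        subst; rewrite irB /= -neq_ltn; apply/eqP => /val_inj /enum_rank_inj egg.
        by apply: ne; rewrite egg.
      have := toB _ _ e (elimN eqP nbb); by case/orP => ->; rewrite ?orbT.
- move=> l; have [x ex] := inh l; by exists (inr (x, [ffun=> false])).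
- move=> lt' [ir' tr' to'] agree.
  have [h hP] : exists h : TB -> W, forall x y, cB x == k -> cB y == k ->
      lt' (inl (h x)) (inl (h y)) = ltB0 x y.
    apply: (@ordemb TB W (fun x => cB x == k) ltB0 (fun w w' => lt' (inl w) (inl w'))).
    + exact: irB.
    + by move=> x y z /eqP ex /eqP ey /eqP ez; apply: trB; rewrite ?ex ?ey ?ez.
    + by move=> x y /eqP ex /eqP ey; apply: toB; rewrite ex ey.
    + by move=> x; apply: ir'.
    + by move=> x y z; apply: tr'.
    + by move=> x y nxy; apply: to' => // [[]].
    + rewrite card_ord ltnS; exact: max_card.
  pose g (b : TB) : {ffun W -> bool} :=
    [ffun w => [exists b', (cB b' == k) && (h b' == w) && EB b b']].
  have hinj : forall x y, cB x == k -> cB y == k -> h x = h y -> x = y.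
    move=> x y ex ey exy; apply/eqP; apply: contraT => nxy.
    have := toB x y (etrans (eqP ex) (esym (eqP ey))) (elimN eqP nxy).
    by rewrite -!hP // exy ir'.
  have gP : forall b b', cB b' == k -> g b (h b') = EB b b'.
    move=> b b' eb'; rewrite ffunE; apply/existsP/idP.
      by case=> b'' /andP[/andP[eb'' /eqP hb]] E; rewrite -(hinj _ _ eb'' eb' hb).
    by move=> E; exists b'; rewrite eb' eqxx E.
  exists (fun b => if cB b == k then inl (h b) else inr (b, g b)); split.
  + move=> x y; case ex: (cB x == k); case ey: (cB y == k) => //.
      by case=> /(hinj _ _ ex ey).
    by case.
  + by move=> x; case ex: (cB x == k) => //=; rewrite (eqP ex).
  + move=> x y; case ex: (cB x == k); case ey: (cB y == k) => /=.
    * by rewrite vB1 // (eqP ex) (eqP ey).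
    * rewrite ey gP //; rewrite -vB2 //; move=> exy.
      by move: ey; rewrite exy ex.
    * by rewrite ex gP.
    * by [].
  + move=> x y exy kx; case ex: (cB x == k).
      have ey : cB y == k by rewrite -exy.
      by rewrite ey hP.
    have ey : (cB y == k) = false by rewrite -exy.
    rewrite ey agree /=; last first.
      by rewrite ltn_neqAle kx andbT; apply/negP => /eqP /val_inj e; rewrite e eqxx in ex.
      by [].
    case: (eqVneq x y) => [exy'|nxy] /=; first by subst; rewrite irB ltnn.
    by rewrite orbF.
Qed.

Lemma phiS n k (kn : k < n) : Phi n k -> Phi n k.+1.
Proof.
move=> IH I TA EA cA ltA hv.
have [TB [cB [EB [ltB0 [vB oB inh emb]]]]] := IH I TA EA cA ltA hv.
have [T' [c' [E' [lt'0 [v' o' inh' spec]]]]] := @spl n TB cB EB ltB0 (Ordinal kn) vB oB inh.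
exists T', c', E', lt'0; split => // lt' ok' agree i.
have [e [einj ec eE elt]] := spec lt' ok' (fun x y exy h => agree x y exy h).
pose lt x y := lt' (e x) (e y).
have okl : ord_ok cB lt.
  case: ok' => ir tr to; split.
  - by move=> x; apply: ir.
  - by move=> x y z exy eyz; apply: tr; rewrite !ec.
  - by move=> x y exy nxy; apply: to; [rewrite !ec| move/einj].
have [f [fc fE flt]] := emb lt okl (fun x y exy kx => elt x y exy kx) i.
exists (e \o f); split.
- by move=> x /=; rewrite ec fc.
- by move=> x y /=; rewrite eE fE.
- by move=> x y exy /=; rewrite -flt.
Qed.

Lemma phi_all n k : k <= n -> Phi n k.
Proof.
elim: k => [|k IH] kn; first exact: phi0.
by apply: phiS => //; apply: IH; apply: ltnW.
Qed.

Lemma star_lab n (n_pos : 0 < n) (T : finType) (E : rel T) (P : 'I_n -> {set T}) (lt : rel T) :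
  in_Kn n E ->
  [/\ (forall i j : 'I_n, i != j -> [disjoint P i & P j]),
      (forall i : 'I_n, P i = set0 \/ is_part E (P i)) &
      (forall X, is_part E X -> exists i : 'I_n, X = P i)] ->
  exists c : T -> 'I_n, (forall x i, (x \in P i) = (c x == i)) /\
                        (forall x y, (c x == c y) = nonadj E x y).
Proof.
move=> [[_ eqv] _] [dis pa cv].
have refl : forall x, nonadj E x x by move=> x; rewrite /nonadj eqxx.
have ex : forall x, exists i, x \in P i.
  move=> x; have [i ei] := cv (part_of E x) (ex_intro _ x erefl).
  by exists i; rewrite -ei inE refl.
pose c x := odflt (Ordinal n_pos) [pick i | x \in P i].
have cP : forall x, x \in P (c x).
  move=> x; rewrite /c; case: pickP => [i //|none].
  by have [i xi] := ex x; rewrite none in xi.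
have cE : forall x i, (x \in P i) = (c x == i).
  move=> x i; apply/idP/eqP => [xi|<-//]; apply/eqP; apply: contraT => nci.
  by rewrite (disjointFr (dis _ _ nci) (cP x)) in xi.
exists c; split => // x y.
have : P (c x) = part_of E x.
  case: (pa (c x)) => [e|[z ez]]; first by have := cP x; rewrite e inE.
  have xz : nonadj E z x by have := cP x; rewrite ez inE.
  rewrite ez; apply/setP => w; rewrite !inE.
  by have [_ h] := eqv z x w; rewrite (h xz).
move=> e; rewrite eq_sym -cE e inE //.
Qed.

Lemma nonadjL n (T : finType) (c : T -> 'I_n) (E : rel T) :
  validL c E -> forall x y, nonadj E x y = (c x == c y).
Proof.
move=> [v1 v2] x y; rewrite /nonadj.
case: (eqVneq x y) => [->|nxy]; first by rewrite eqxx.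
case: (eqVneq (c x) (c y)) => [e|ne] /=.
  by rewrite v1 // v1.
by rewrite (v2 x y (elimN eqP ne)); case: (E x y).
Qed.

Lemma validKn n (T : finType) (c : T -> 'I_n) (E : rel T) : validL c E -> in_Kn n E.
Proof.
move=> v; have nE := nonadjL v; case: v => [v1 v2]; split; first split.
- split; first by move=> x; rewrite v1.
  move=> x y Exy; case: (eqVneq (c x) (c y)) => [e|ne]; first by rewrite v1 in Exy.
  by rewrite v2 ?Exy //; apply/eqP.
- move=> x y z; rewrite !nE eqxx; split => // /eqP ->; by [].
- apply: leq_trans (_ : #|[set [set y | c y == l] | l : 'I_n]| <= n).
    apply: subset_leq_card; apply/subsetP => X /imsetP [x _ ->].
    apply/imsetP; exists (c x) => //; apply/setP => y; rewrite !inE nE eq_sym.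
    by [].
  by apply: leq_trans (leq_imset_card _ _) _; rewrite card_ord.
Qed.

Definition validP n (TA : finType) (EA : rel TA)
  (p : {ffun TA -> 'I_n} * {ffun TA * TA -> bool}) : Prop :=
  validL (fun x => p.1 x) EA /\ ord_ok (fun x => p.1 x) (fun x y => p.2 (x, y)).

Definition validb n (TA : finType) (EA : rel TA)
  (p : {ffun TA -> 'I_n} * {ffun TA * TA -> bool}) : bool :=
  if excluded_middle_informative (validP EA p) then true else false.

Lemma validbP n (TA : finType) (EA : rel TA) p : validb EA p <-> @validP n TA EA p.
Proof. by rewrite /validb; case: excluded_middle_informative. Qed.

Unset Implicit Arguments.

Theorem theorem8p6 (n : nat) (n_pos : 0 < n) :
  forall (TA : finType) (EA : rel TA), in_Kn n EA ->
  exists (TB : finType) (EB : rel TB), in_Kn n EB /\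
    forall (PA : 'I_n -> {set TA}) (ltA : rel TA)
           (PB : 'I_n -> {set TB}) (ltB : rel TB),
      in_Kn_star EA PA ltA -> in_Kn_star EB PB ltB ->
      exists f : TA -> TB, star_embedding EA PA ltA EB PB ltB f.
Proof.
move=> TA EA KA.
have [[[irrA asymA] eqA] _] := KA.
pose I := {p : {ffun TA -> 'I_n} * {ffun TA * TA -> bool} | validb EA p}.
pose cA (i : I) x := (val i).1 x.
pose lA (i : I) x y := (val i).2 (x, y).
have hv : forall i, validL (cA i) EA /\ ord_ok (cA i) (lA i).
  by move=> i; apply/validbP; exact: (valP i).
have [TB [cB [EB [ltB0 [vB oB inh emb]]]]] := phi_all (leqnn n) hv.
exists TB, EB; split; first exact: validKn vB.
move=> PA ltA PB ltB [KA' [dA pA cvA [irA trA toA] monA]] [KB [dB pB cvB [irB trB toB] monB]].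
have [cPA [cPAi cPAe]] := star_lab n_pos ltA KA' (And3 dA pA cvA).
have [cPB [cPBi cPBe]] := star_lab n_pos ltB KB (And3 dB pB cvB).
have nB := nonadjL vB.
pose phi (l : 'I_n) := odflt l (omap cPB [pick x | cB x == l]).
have phiE : forall y, phi (cB y) = cPB y.
  move=> y; rewrite /phi; case: pickP => [x /eqP ex /=|none].
    by apply/eqP; rewrite cPBe nB ex.
  by have := none y; rewrite eqxx.
have phiinj : injective phi.
  move=> l l'; have [x <-] := inh l; have [x' <-] := inh l'.
  by rewrite !phiE => /eqP; rewrite cPBe nB => /eqP.
have [psi psiK phiK] := inj_card_bij phiinj (leqnn _).
pose c' x := psi (cPA x).
have ce : forall x y, (c' x == c' y) = nonadj EA x y.
  move=> x y; rewrite -cPAe; apply/eqP/eqP => [e|e]; last by rewrite /c' e.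
  by rewrite -(phiK (cPA x)) -(phiK (cPA y)) /c' in e *; rewrite e.
pose p := ([ffun x => c' x], [ffun q : TA * TA => ltA q.1 q.2]).
have vp : validP EA p.
  split; split.
  - move=> x y /= /eqP; rewrite !ffunE ce /nonadj.
    case: (eqVneq x y) => [->|_] /=; first by move=> _; apply/negbTE.
    by case/andP => /negbTE.
  - move=> x y /=; rewrite !ffunE => /eqP; rewrite ce /nonadj negb_or negb_and !negbK.
    case/andP=> _ H; case Exy: (EA x y) H => /= H.
      by apply/negbTE; apply: asymA. by rewrite H.
  - by move=> x /=; rewrite ffunE; apply/negbTE.
  - by move=> x y z _ _ /=; rewrite !ffunE; apply: trA.
  - by move=> x y _ nxy /=; rewrite !ffunE; apply: toA; apply/eqP.
pose i : I := exist _ p (proj2 (validbP EA p) vp).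
have okB : ord_ok cB ltB.
  split.
  - by move=> x; apply/negbTE.
  - by move=> x y z _ _; apply: trB.
  - by move=> x y _ nxy; apply: toB; apply/eqP.
have agN : forall x y, cB x = cB y -> n <= cB x -> ltB x y = ltB0 x y.
  by move=> x y _ h; have := ltn_ord (cB x); rewrite ltnNge h.
have [f [fc fE flt]] := emb ltB okB agN i.
have fc' : forall x, cB (f x) = c' x by move=> x; rewrite fc /cA /= ffunE.
have cPf : forall x, cPB (f x) = cPA x by move=> x; rewrite -phiE fc' /c' phiK.
have flt' : forall x y, c' x = c' y -> ltB (f x) (f y) = ltA x y.
  by move=> x y e; rewrite flt /cA /lA /= ?ffunE //.
have fltA : forall x y, ltB (f x) (f y) = ltA x y.
  move=> x y; case: (eqVneq (c' x) (c' y)) => [e|ne]; first exact: flt'.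
  have ne' : cPA x <> cPA y by move=> e; move: ne; rewrite /c' e eqxx.
  have xi : x \in PA (cPA x) by rewrite cPAi.
  have yi : y \in PA (cPA y) by rewrite cPAi.
  have fxi : f x \in PB (cPA x) by rewrite cPBi cPf.
  have fyi : f y \in PB (cPA y) by rewrite cPBi cPf.
  case: (ltngtP (cPA x) (cPA y)) => [lxy|lyx|exy].
  - by rewrite (monA _ _ _ _ lxy xi yi) (monB _ _ _ _ lxy fxi fyi).
  - have a1 := monA _ _ _ _ lyx yi xi; have b1 := monB _ _ _ _ lyx fyi fxi.
    case e1: (ltA x y); first by have := trA _ _ _ e1 a1; rewrite (negbTE (irA x)).
    case e2: (ltB (f x) (f y)) => //.
    by have := trB _ _ _ e2 b1; rewrite (negbTE (irB (f x))).
  - by case: ne'; apply: val_inj.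
exists f; split.
- move=> x y exy; apply/eqP; apply: contraT => nxy.
  have := toA x y nxy; rewrite -!fltA exy.
  by rewrite (negbTE (irB (f y))).
- by move=> x y; rewrite fE.
- by move=> j x; rewrite cPAi cPBi cPf.
- exact: fltA.
Qed.
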